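(* Let $n\ge m\ge 1$. Let $L^\sharp_m$ be an $m$-th order Lagrangian (possibly singular and explicitly time dependent). Let $W_{n-1}$ be an arbitrary smooth function of $q^{(0)i},\dots,q^{(n-1)i}$ and $t$. Let $L_n$ be the $n$-th order Lagrangian $$L_n=L^\sharp_m+\frac{d}{dt}W_{n-1}.$$ Then $L_n$ and $L^\sharp_m$ are quantum mechanically equivalent. That is, they lead to the same quantum mechanics, with equivalence understood as the equivalence relation generated by the correspondence of Proposition 1.
   Context: Ostrogradski formalism: for an $N$-th order Lagrangian with $q^{(I)i}=d^Iq^i/dt^I$, the canonical variables are $q^{Ii}=q^{(I)i}$ and $p_{Ii}=\sum_{K=I+1}^{N}(-d/dt)^{K-I-1}\partial L/\partial q^{(K)i}$, for $I=0,\dots,N-1$. Quantization: all constraints are assumed first class. The wave function $\psi(q^{Ii},t)$ obeys the Schrödinger equation $i\hbar\partial_t\psi=\hat H\psi$, with $\hat p_{Ii}=-i\hbar\partial/\partial q^{Ii}$, and satisfies $\hat\gamma\psi=0$ for each constraint. Hamiltonians and constraints are assumed polynomial in the momenta, with a fixed operator ordering. Basic correspondence (Proposition 1): let $L^\sharp$ have order $N-1\ge1$ and $L=L^\sharp+dW/dt$ with $W=W(q^{(0)},\dots,q^{(N-1)},t)$. Treat $L$ by the extended formalism, with Hamiltonian $H^\sharp(\mathbf q_\sharp,\mathbf p_{\sharp}-\partial W/\partial\mathbf q_\sharp,t)-\partial W/\partial t$ and constraints $p_{N-1,i}-\partial W/\partial q^{N-1,i}$ and $\gamma^\sharp_a(\mathbf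 q_\sharp,\mathbf p_\sharp-\partial W/\partial\mathbf q_\sharp,t)$, where $\mathbf q_\sharp=(q^{Ai})_{A\le N-2}$. Then the physical wave functions of $L$ are exactly $\psi^\sharp(\mathbf q_\sharp,t)e^{iW/\hbar}$, with $\psi^\sharp$ ranging over the physical wave functions of $L^\sharp$. Such $L$ and $L^\sharp$ are called quantum mechanically equivalent, and ''quantum mechanically equivalent'' in general means related by a finite chain of such correspondences (in either direction). *)

(* Defs.v *)
From HB Require Import structures.
From mathcomp Require Import all_boot all_order all_algebra.
From mathcomp Require Import all_classical all_reals all_analysis.

Set Implicit Arguments.
Unset Strict Implicit.
Unset Printing Implicit Defensive.
Import Order.TTheory GRing.Theory Num.Theory.
Local Open Scope ring_scope.

Section Ostrogradski.
Variables (R : realType) (d : nat).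

(* A point of the (infinite) jet space: jet k i = q^{(k)i}. *)
Definition jet := nat -> 'I_d -> R.

(* Functions of the jet variables and of time t (Lagrangians, W's). *)
Definition jfun := jet -> R -> R.

(* Coordinates: None is time t, Some (k, i) is q^{(k)i}. *)
Definition coord := option (nat * 'I_d).

Definition upd (j : jet) (k : nat) (i : 'I_d) (s : R) : jet :=
  fun K' i' => if (K' == k) && (i' == i) then s else j K' i'.

Definition slice (c : coord) (f : jfun) (j : jet) (t : R) : R -> R :=
  match c with
  | None => fun s => f j s
  | Some (k, i) => fun s => f (upd j k i s) t
  end.

Definition cval (c : coord) (j : jet) (t : R) : R :=
  match c with None => t | Some (k, i) => j k i end.

Definition pd (c : coord) (f : jfun) : jfun :=
  fun j t => derive1 (slice c f j t) (cval c j t).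

Fixpoint diff_n (n : nat) (f : jfun) : Prop :=
  match n with
  | 0 => True
  | n'.+1 => forall c : coord,
      (forall j t, derivable (slice c f j t) (cval c j t) 1) /\ diff_n n' (pd c f)
  end.

Definition smooth (f : jfun) : Prop := forall n, diff_n n f.

Definition depends_upto (K : nat) (f : jfun) : Prop :=
  forall (j j' : jet) (t : R),
    (forall (k : nat) (i : 'I_d), (k <= K)%N -> j k i = j' k i) -> f j t = f j' t.

Definition tder (K : nat) (W : jfun) : jfun :=
  fun j t => pd None W j t +
    \sum_(k < K.+1) \sum_(i < d) pd (Some (nat_of_ord k, i)) W j t * j k.+1 i.

Definition jadd (f g : jfun) : jfun := fun j t => f j t + g j t.

Definition is_lagr (N : nat) (L : jfun) : Prop := smooth L /\ depends_upto N L.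

Definition prop1_corr (N : nat) (L : jfun) (Ls : jfun) : Prop :=
  (2 <= N)%N /\ is_lagr N.-1 Ls /\
  exists W : jfun, smooth W /\ depends_upto N.-1 W /\ L = jadd Ls (tder N.-1 W).

Inductive qm_equiv : nat * jfun -> nat * jfun -> Prop :=
  | qm_corr N L Ls : prop1_corr N L Ls -> qm_equiv (N, L) (N.-1, Ls)
  | qm_refl p : qm_equiv p p
  | qm_sym p q : qm_equiv p q -> qm_equiv q p
  | qm_trans p q r : qm_equiv p q -> qm_equiv q r -> qm_equiv p r.

End Ostrogradski.

(* Main.v *)
Require Import Defs.
From mathcomp Require Import all_boot all_order all_algebra.
From mathcomp Require Import all_classical all_reals all_analysis.

Set Implicit Arguments.
Unset Strict Implicit.
Unset Printing Implicit Defensive.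
Import Order.TTheory GRing.Theory Num.Theory.
Local Open Scope ring_scope.

Section Aux.
Variables (R : realType) (d : nat).
Local Notation jfun := (jfun R d).

Definition jmul (f g : jfun) : jfun := fun j t => f j t * g j t.
Definition jcst (a : R) : jfun := fun _ _ => a.
Definition jco (k : nat) (i : 'I_d) : jfun := fun j _ => j k i.

Lemma upd_id (j : jet R d) k i : upd j k i (j k i) = j.
Proof.
apply/funext => k'; apply/funext => i'; rewrite /upd.
by case: ifP => // /andP [/eqP -> /eqP ->].
Qed.

Lemma slice_add c (f g : jfun) j t :
  slice c (jadd f g) j t = slice c f j t + slice c g j t.
Proof. by case: c => [[k i]|]; apply/funext. Qed.

Lemma slice_mul c (f g : jfun) j t :
  slice c (jmul f g) j t = slice c f j t * slice c g j t.
Proof. by case: c => [[k i]|]; apply/funext. Qed.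

Lemma slice_cst c a j t : slice c (jcst a) j t = cst a.
Proof. by case: c => [[k i]|]; apply/funext. Qed.

Lemma pd_cst c a : pd c (jcst a) = jcst 0.
Proof.
apply/funext => j; apply/funext => t; rewrite /pd slice_cst.
exact: derive1_cst.
Qed.

Lemma diff_cst n a : diff_n n (jcst a).
Proof.
elim: n a => //= n IH a c; split.
  by move=> j t; rewrite slice_cst; exact: derivable_cst.
rewrite pd_cst; exact: IH.
Qed.

Lemma smooth_cst a : smooth (jcst a).
Proof. by move=> n; apply: diff_cst. Qed.

Lemma diff_add n : forall f g : jfun, diff_n n f -> diff_n n g -> diff_n n (jadd f g).
Proof.
elim: n => //= n IH f g Hf Hg c.
have [df pf] := Hf c; have [dg pg] := Hg c; split.
  by move=> j t; rewrite slice_add; apply: derivableD.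
have -> : pd c (jadd f g) = jadd (pd c f) (pd c g).
  apply/funext => j; apply/funext => t.
  by rewrite /jadd /pd slice_add !derive1E deriveD.
exact: IH.
Qed.

Lemma smooth_add (f g : jfun) : smooth f -> smooth g -> smooth (jadd f g).
Proof. by move=> Hf Hg n; apply: diff_add. Qed.

Lemma smooth_pd c (f : jfun) : smooth f -> smooth (pd c f).
Proof. by move=> H n; exact: ((H n.+1) c).2. Qed.

Lemma diff_mul n : forall f g : jfun, smooth f -> smooth g -> diff_n n (jmul f g).
Proof.
elim: n => //= n IH f g Hf Hg c.
have [df _] := Hf 1%N c; have [dg _] := Hg 1%N c; split.
  by move=> j t; rewrite slice_mul; apply: derivableM.
have -> : pd c (jmul f g) = jadd (jmul f (pd c g)) (jmul g (pd c f)).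
  apply/funext => j; apply/funext => t.
  rewrite /jadd /jmul /pd slice_mul !derive1E deriveM //.
  by case: c {df dg} => [[k i]|] /=; rewrite ?upd_id.
apply: diff_add; apply: IH => //; exact: smooth_pd.
Qed.

Lemma smooth_mul (f g : jfun) : smooth f -> smooth g -> smooth (jmul f g).
Proof. by move=> Hf Hg n; apply: diff_mul. Qed.

Lemma smooth_co k i : smooth (jco k i).
Proof.
case => //= n c.
case: c => [[k' i']|].
  have E : forall j t, slice (Some (k', i')) (jco k i) j t =
    if (k == k') && (i == i') then id else cst (j k i).
    move=> j t; apply/funext => s /=; rewrite /upd.
    by rewrite /jco; case: ifP.
  split.
    move=> j t; rewrite E; case: ifP => _; [exact: derivable_id|exact: derivable_cst].
  have -> : pd (Some (k', i')) (jco k i) =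
            jcst (if (k == k') && (i == i') then 1 else 0).
    apply/funext => j; apply/funext => t; rewrite /pd E /jcst.
    case: ifP => _; [exact: derive1_id|exact: derive1_cst].
  exact: diff_cst.
have E : forall j t, slice None (jco k i) j t = cst (j k i).
  by move=> j t; apply/funext.
split; first by move=> j t; rewrite E; exact: derivable_cst.
have -> : pd None (jco k i) = jcst 0.
  apply/funext => j; apply/funext => t; rewrite /pd E; exact: derive1_cst.
exact: diff_cst.
Qed.

Lemma smooth_sum (I : Type) (r : seq I) (G : I -> jfun) :
  (forall x, smooth (G x)) -> smooth (fun j t => \sum_(x <- r) G x j t).
Proof.
move=> HG; elim: r => [|a r IH].
  have -> : (fun j t => \sum_(x <- [::]) G x j t) = jcst 0.
    by apply/funext => j; apply/funext => t; rewrite big_nil.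
  exact: smooth_cst.
have -> : (fun j t => \sum_(x <- a :: r) G x j t) =
          jadd (G a) (fun j t => \sum_(x <- r) G x j t).
  by apply/funext => j; apply/funext => t; rewrite big_cons.
exact: smooth_add.
Qed.

Lemma smooth_tder K (W : jfun) : smooth W -> smooth (tder K W).
Proof.
move=> HW.
change (smooth (jadd (pd None W) (fun j t => \sum_(k < K.+1)
   (fun j t => \sum_(i < d) jmul (pd (Some (nat_of_ord k, i)) W) (jco k.+1 i) j t) j t))).
apply: smooth_add; first exact: smooth_pd.
apply: smooth_sum => k; apply: smooth_sum => i.
apply: smooth_mul; [exact: smooth_pd | exact: smooth_co].
Qed.

Lemma depends_mono K K' (f : jfun) : (K <= K')%N -> depends_upto K f -> depends_upto K' f.
Proof.
move=> le H j j' t E; apply: H => k i hk; apply: E; exact: leq_trans hk le.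
Qed.

Lemma depends_tder K (W : jfun) : depends_upto K W -> depends_upto K.+1 (tder K W).
Proof.
move=> HW j j' t E.
have E' : forall k i, (k <= K)%N -> j k i = j' k i.
  by move=> k i hk; apply: E; exact: leqW.
rewrite /tder; congr (_ + _).
  rewrite /pd /=; congr (derive1 _ _); apply/funext => s; exact: HW.
apply: eq_bigr => k _; apply: eq_bigr => i _.
have hk : (k <= K)%N by rewrite -ltnS.
rewrite (E k.+1 i) //; congr (_ * _).
rewrite /pd /= (E' k i hk); congr (derive1 _ _); apply/funext => s.
apply: HW => k' i' hk'; rewrite /upd; case: ifP => // _; exact: E'.
Qed.

Lemma tder_succ K (W : jfun) : depends_upto K W -> tder K.+1 W = tder K W.
Proof.
move=> HW; apply/funext => j; apply/funext => t.
rewrite /tder big_ord_recr /=.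
suff -> : \sum_(i < d) pd (Some (K.+1, i)) W j t * j K.+2 i = 0 by rewrite addr0.
apply: big1 => i _.
have -> : pd (Some (K.+1, i)) W j t = 0.
  rewrite /pd /=.
  have -> : (fun s => W (upd j K.+1 i s) t) = cst (W j t).
    apply/funext => s /=; apply: HW => k' i' hk; rewrite /upd.
    case: ifP => // /andP [/eqP hk' _]; move: hk; rewrite hk' ltnn //.
  exact: derive1_cst.
by rewrite mul0r.
Qed.

Lemma tder0 K : tder K (jcst 0) = jcst 0.
Proof.
apply/funext => j; apply/funext => t; rewrite /tder pd_cst {1}/jcst add0r.
by rewrite big1 // => k _; rewrite big1 // => i _; rewrite pd_cst /jcst mul0r.
Qed.

Lemma jadd0 (f : jfun) : jadd f (jcst 0) = f.
Proof. by apply/funext => j; apply/funext => t; rewrite /jadd addr0. Qed.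

Lemma corr0 N (L : jfun) : (0 < N)%N -> is_lagr N L -> qm_equiv (N.+1, L) (N, L).
Proof.
move=> hN HL.
have -> : (N, L) = (N.+1.-1, L) by [].
apply: qm_corr; split; first by [].
split => //; exists (jcst 0); split; first exact: smooth_cst.
split; first by move=> ???.
by rewrite tder0 jadd0.
Qed.
End Aux.

Theorem theorem1 (R : realType) (d n m : nat) (Ls W : jfun R d) :
  (1 <= m)%N -> (m <= n)%N ->
  is_lagr m Ls ->
  smooth W -> depends_upto n.-1 W ->
  qm_equiv (n, jadd Ls (tder n.-1 W)) (m, Ls).
Proof.
move=> h1m hmn [sL dL] sW dW.
have lagr : forall k, (m <= k)%N -> is_lagr k Ls.
  by move=> k hk; split => //; exact: depends_mono hk dL.
have B : forall k, qm_equiv ((m + k)%N, Ls) (m, Ls).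
  elim => [|k IH]; first by rewrite addn0; apply: qm_refl.
  apply: qm_trans IH; rewrite addnS; apply: corr0; [exact: leq_trans h1m (leq_addr _ _)|apply: lagr; exact: leq_addr].
case: n hmn dW => [|K]; first by rewrite leqNgt h1m.
move=> hmn dW /=.
set L' := jadd Ls (tder K W).
have HL' : is_lagr K.+1 L'.
  split; first by apply: smooth_add => //; exact: smooth_tder.
  move=> j j' t E; rewrite /L' /jadd; congr (_ + _).
    apply: (depends_mono hmn dL) => k i hk; exact: E.
  exact: (depends_tder dW).
apply: qm_trans; first exact: qm_sym (corr0 (ltn0Sn K) HL').
apply: (qm_trans (q := (K.+1, Ls))).
  have -> : (K.+1, Ls) = (K.+2.-1, Ls) by [].
  apply: qm_corr; split => //; split; first exact: lagr.
  exists W; split => //; split; first exact: (depends_mono (leqnSn K) dW).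
  by rewrite /= tder_succ.
have -> : K.+1 = (m + (K.+1 - m))%N by rewrite subnKC.
exact: B.
Qed.
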